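(* Let $F=\sum_{\mathbf i\in I_F}a_{\mathbf i}\mathbf{x}^{\mathbf i}\in K[x_1,\dots,x_n]$ be irreducible and $\mathbf u\in(K^* )^n$. Then $F$ and $D_{\mathbf u}(F)$ are not coprime if and only if $\frac{a_{\mathbf i}\mathbf u^{\mathbf i}}{a_{\mathbf j}\mathbf u^{\mathbf j}}\in\mathbf{k}^*$ for all $\mathbf i,\mathbf j\in I_F$.
   Context: $\mathbf{k}$ is an algebraically closed field of characteristic zero, $K=\mathbf{k}(C)$ the function field of a smooth projective curve $C$ over $\mathbf{k}$. Fix $t\in K\setminus\mathbf{k}$; $\eta'=d\eta/dt$ is the derivation of $K$ extending $d/dt$ on $\mathbf{k}(t)$ (its kernel is $\mathbf{k}$). $I_F$ is the set of exponents $\mathbf i$ with $a_{\mathbf i}\ne0$, $\mathbf x^{\mathbf i}=x_1^{i_1}\cdots x_n^{i_n}$, $\mathbf u^{\mathbf i}=u_1^{i_1}\cdots u_n^{i_n}$, and $D_{\mathbf u}(F)=\sum_{\mathbf i\in I_F}\frac{(a_{\mathbf i}\mathbf{u}^{\mathbf i})'}{\mathbf{u}^{\mathbf i}}\mathbf{x}^{\mathbf i}$. ''Not coprime'' means having a common nonconstant factor in $K[x_1,\dots,x_n]$ (the zero polynomial is divisible by $F$). *)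

(* Defs.v *)
From HB Require Import structures.
From mathcomp Require Import all_boot all_order all_algebra.
From mathcomp Require Import mpoly.
Set Implicit Arguments. Unset Strict Implicit. Unset Printing Implicit Defensive.
Import GRing.Theory.
Local Open Scope ring_scope.

Definition is_derivation (K : fieldType) (d : K -> K) : Prop :=
  (forall x y : K, d (x + y) = d x + d y) /\
  (forall x y : K, d (x * y) = d x * y + x * d y).

Definition mon_eval (K : fieldType) (n : nat) (u : 'I_n -> K) (m : 'X_{1..n}) : K :=
  \prod_(i < n) u i ^+ m i.

Definition Du (K : fieldType) (d : K -> K) (n : nat) (u : 'I_n -> K)
    (F : {mpoly K[n]}) : {mpoly K[n]} :=
  \sum_(m <- msupp F) (d (F@_m * mon_eval u m) / mon_eval u m) *: 'X_[m].

(* constant polynomial (degree <= 0) *)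
Definition mconst (K : fieldType) (n : nat) (p : {mpoly K[n]}) : bool :=
  (msize p <= 1)%N.

Definition mdvd (K : fieldType) (n : nat) (G P : {mpoly K[n]}) : Prop :=
  exists Q : {mpoly K[n]}, P = Q * G.

(* irreducible: nonconstant (non-unit, nonzero) and every factorization has a
   constant (= unit, since the product is nonzero) factor *)
Definition mirreducible (K : fieldType) (n : nat) (F : {mpoly K[n]}) : Prop :=
  ~~ mconst F /\
  (forall G H : {mpoly K[n]}, F = G * H -> mconst G \/ mconst H).

Definition not_coprime (K : fieldType) (n : nat) (P Q : {mpoly K[n]}) : Prop :=
  exists G : {mpoly K[n]}, ~~ mconst G /\ mdvd G P /\ mdvd G Q.

(* Main.v *)
Require Import Defs.
From HB Require Import structures.
From mathcomp Require Import all_boot all_order all_algebra.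
From mathcomp Require Import mpoly.
Import GRing.Theory.
Local Open Scope ring_scope.

Lemma coef_sumX (K : fieldType) n (r : seq 'X_{1..n}) (f : 'X_{1..n} -> K) m :
  uniq r -> (\sum_(m' <- r) f m' *: ('X_[m'] : {mpoly K[n]}))@_m =
            if m \in r then f m else 0.
Proof.
elim: r => [|x r IH]; first by rewrite big_nil mcoeff0.
rewrite /= => /andP [xr ur]; rewrite big_cons mcoeffD mcoeffZ mcoeffX IH // in_cons.
case: (eqVneq x m) => [<-|nmx] /=.
  by rewrite (negbTE xr) mulr1 addr0.
by rewrite mulr0 add0r; case: (m \in r) => //; rewrite eq_sym (negbTE nmx).
Qed.

Lemma Du_coef (K : fieldType) d n u (F : {mpoly K[n]}) m :
  (Du d u F)@_m = if m \in msupp F then d (F@_m * mon_eval u m) / mon_eval u m else 0.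
Proof. by rewrite /Du coef_sumX // msupp_uniq. Qed.

Lemma mon_eval_neq0 (K : fieldType) n (u : 'I_n -> K) m :
  (forall i, u i != 0) -> mon_eval u m != 0.
Proof. by move=> Hu; rewrite /mon_eval; apply/prodf_neq0 => i _; rewrite expf_neq0. Qed.

Lemma der0 (K : fieldType) (d : K -> K) : is_derivation d -> d 0 = 0.
Proof. move=> [Ha _]; have h := Ha 0 0; rewrite addr0 in h.
by apply: (addrI (d 0)); rewrite addr0 -h. Qed.

Lemma der_quot (K : fieldType) (d : K -> K) l x y : is_derivation d -> y != 0 ->
  d x = l * x -> d y = l * y -> d (x / y) = 0.
Proof.
move=> [_ Hm] y0 dx dy.
have : d x = d (x / y) * y + x / y * d y by rewrite -Hm divfK.
rewrite dx dy mulrCA divfK // => h.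
have /eqP : d (x / y) * y = 0 by apply: (addIr (l * x)); rewrite add0r -h.
by rewrite mulf_eq0 (negbTE y0) orbF => /eqP.
Qed.

Lemma msize_Du (K : fieldType) d n u (F : {mpoly K[n]}) : (msize (Du d u F) <= msize F)%N.
Proof.
rewrite [msize (Du _ _ _)]msizeE; apply/bigmax_leqP_seq => m mD _.
apply: msize_mdeg_lt; move: mD; rewrite mcoeff_msupp Du_coef.
by case: ifP => //; rewrite eqxx.
Qed.
From mathcomp Require Import ring.

Theorem lemma3p3
  (k : closedFieldType) (Hchar : [pchar k] =i pred0)
  (K : fieldType) (iota : {rmorphism k -> K})
  (d : K -> K) (Hd : is_derivation d)
  (t : K) (Ht : d t = 1)
  (Hker : forall x : K, d x = 0 <-> exists c : k, x = iota c)
  (n : nat) (F : {mpoly K[n]}) (HF : mirreducible F)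
  (u : 'I_n -> K) (Hu : forall i, u i != 0) :
  not_coprime F (Du d u F) <->
  (forall i j : 'X_{1..n}, i \in msupp F -> j \in msupp F ->
     exists c : k, c != 0 /\
       (F@_i * mon_eval u i) / (F@_j * mon_eval u j) = iota c).
Proof.
have F0 : F != 0.
  by apply: contraNneq HF.1 => ->; rewrite /mconst msize0.
have wne m : m \in msupp F -> F@_m * mon_eval u m != 0.
  by move=> mF; rewrite mulf_neq0 ?mon_eval_neq0 // -mcoeff_msupp.
split.
- move=> [G [Gnc [[Q1 EF] [Q2 ED]]]].
  have Q1c : mconst Q1.
    by case: (HF.2 _ _ EF) => // Gc; rewrite Gc in Gnc.
  have EQ1 := msize1_polyC Q1c.
  set c := Q1@_0 in EQ1.
  have c0 : c != 0.
    apply: contraNneq F0 => c0; by rewrite EF EQ1 c0 mul0r.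
  have EG : G = c^-1 *: F.
    by rewrite EF EQ1 mul_mpolyC scalerA mulVf // scale1r.
  have [l El] : exists l, Du d u F = l *: F.
    set P := Q2 * (c^-1)%:MP.
    have EP : Du d u F = P * F by rewrite ED EG -mul_mpolyC /P mulrA.
    case: (eqVneq P 0) => [P0|Pn0].
      by exists 0; rewrite EP P0 mul0r scale0r.
    have : (msize P <= 1)%N.
      have := @msize_Du _ d _ u F; rewrite EP msizeM //.
      have : (0 < msize F)%N by rewrite lt0n msize_poly_eq0.
      case: (msize F) => // s _; case: (msize P) => // p; rewrite addnS /=; idtac.
      by move=> h; rewrite ltnS; rewrite -(leq_add2r s) add0n.
    move/msize1_polyC => EP'.
    by exists (P@_0); rewrite EP {1}EP' mul_mpolyC.
  have key m : m \in msupp F -> d (F@_m * mon_eval u m) = l * (F@_m * mon_eval u m).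
    move=> mF; have := congr1 (mcoeff m) El; rewrite Du_coef mF mcoeffZ => h.
    by rewrite mulrA -h divfK // mon_eval_neq0.
  move=> i j iF jF.
  have /Hker [c' Ec'] := @der_quot _ _ _ _ _ Hd (wne _ jF) (key _ iF) (key _ jF).
  exists c'; split => //.
  apply: contraTneq (mulf_neq0 (wne _ iF) (invr_neq0 (wne _ jF))) => c'0.
  by rewrite Ec' c'0 rmorph0 eqxx.
- move=> H.
  have : msupp F != [::] by rewrite msupp_eq0.
  case E: (msupp F) => [//|j0 s] _.
  have j0F : j0 \in msupp F by rewrite E mem_head.
  set w := F@_j0 * mon_eval u j0.
  have w0 : w != 0 by exact: wne.
  have El : Du d u F = (d w / w) *: F.
    apply/mpolyP => m; rewrite Du_coef mcoeffZ.
    case: ifP => mF; last by rewrite (memN_msupp_eq0 (negbT mF)) mulr0.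
    have [c [_ Ec]] := H m j0 mF j0F.
    have Ewm : F@_m * mon_eval u m = iota c * w by rewrite -Ec divfK.
    have dic : d (iota c) = 0 by apply/Hker; exists c.
    rewrite Ewm Hd.2 dic mul0r add0r.
    have um := @mon_eval_neq0 _ _ u m Hu.
    have -> : F@_m = iota c * w / mon_eval u m by rewrite -Ewm mulfK.
    by field; rewrite w0 um.
  exists F; split; first exact: HF.1.
  split; first by exists 1; rewrite mul1r.
  by exists (d w / w)%:MP; rewrite El mul_mpolyC.
Qed.
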